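(* In the setting below, an invertible linear operator on $U^*\oplus U$ belongs to the Mackey group $G_U=G(U^*\oplus U,U^*\oplus U)$ if and only if it is given by left multiplication by a matrix $\psi\in J$ with $\psi$ invertible and $\psi^{-1}\in J$. In other words, $G_U=\widetilde{G}_U$.
   Context: $U$ is a complex vector space with basis $\{e_1,e_2,\dots\}$. Elements of $U^*\oplus U$ are written as pairs $(\gamma,y)$ with $\gamma=(\dots,\gamma_{-2},\gamma_{-1})$ an arbitrary sequence indexed by $\mathbb{Z}_{<0}$ ($\gamma_{-i}=\gamma(e_i)$) and $y=(y_1,y_2,\dots)$ a finitary sequence (finitely many nonzero entries), regarded as a column vector indexed by the ordered set $\mathbb{Z}\setminus\{0\}=\mathbb{Z}_{<0}\sqcup\mathbb{Z}_{>0}$. $U^*\oplus U$ carries the nondegenerate pairing $\langle(\gamma,y),(\varkappa,z)\rangle=\gamma(z)+\varkappa(y)$, and $G(U^*\oplus U,U^*\oplus U)$ is the group of invertible linear $\varphi$ on $U^*\oplus U$ such that $\varphi^*$ maps $U^*\oplus U$ (embedded in $(U^*\oplus U)^*$ via the pairing) onto itself. (This is the Mackey group $G(V_E,V_{*E})$ for $V_E=(W_* )^*\oplus U$, $V_{*E}=W_*\oplus U^*$ under an identification $W_*\cong U$.) $J$ is the set of matrices $M$ with rows and columns indexed by $\mathbb{Z}\setminus\{0\}$, written in blocks $\begin{pmatrix}A&B\\ C&D\end{pmatrix}$ according to $\mathbb{Z}_{<0}\sqcup\mathbb{Z}_{>0}$, such that each row of $A$ is finitary, each column of $D$ is finitary,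 and $C$ has finitely many nonzero entries; such matrices act on $U^*\oplus U$ by left multiplication on columns. $\widetilde{G}_U$ is the group of automorphisms of $U^*\oplus U$ given by matrices $\psi$ with $\psi,\psi^{-1}\in J$. *)

(* Defs.v *)
From HB Require Import structures.
From mathcomp Require Import all_boot all_algebra.
From mathcomp Require Import classical_sets fsbigop reals.
From mathcomp Require Export complex.

Set Implicit Arguments.
Unset Strict Implicit.
Unset Printing Implicit Defensive.
Import GRing.Theory.
Local Open Scope classical_set_scope.
Local Open Scope ring_scope.

(* Conventions:
   - the scalar field is C = R[i] for R : realType;
   - an element (gamma, y) of U^* (+) U is encoded by two sequences
     nat -> K: gamma k = gamma_{-(k+1)} = gamma(e_{k+1}) and
     y k = y_{k+1}; y is finitary;
   - the index set Z\{0} is encoded by idx := nat + nat,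
     inl k <-> -(k+1) (in Z_{<0}), inr k <-> k+1 (in Z_{>0}). *)

Definition finitary (K : nzRingType) (y : nat -> K) : Prop :=
  exists N : nat, forall n : nat, (N <= n)%N -> y n = 0.

Record V (K : nzRingType) := mkV {
  vdual : nat -> K ;
  vfin  : nat -> K ;
  vfinP : finitary vfin }.

Lemma finitaryD (K : nzRingType) (y z : nat -> K) :
  finitary y -> finitary z -> finitary (fun n => y n + z n).
Proof.
move=> [N HN] [M HM]; exists (maxn N M) => n Hn.
rewrite HN ?HM ?addr0 //.
  by apply: leq_trans Hn; rewrite leq_maxr.
by apply: leq_trans Hn; rewrite leq_maxl.
Qed.

Lemma finitaryZ (K : nzRingType) (a : K) (y : nat -> K) :
  finitary y -> finitary (fun n => a * y n).
Proof. by move=> [N HN]; exists N => n Hn; rewrite HN ?mulr0. Qed.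

Definition vadd (K : nzRingType) (v w : V K) : V K :=
  @mkV K (fun n => vdual v n + vdual w n) (fun n => vfin v n + vfin w n)
    (finitaryD (vfinP v) (vfinP w)).

Definition vscale (K : nzRingType) (a : K) (v : V K) : V K :=
  @mkV K (fun n => a * vdual v n) (fun n => a * vfin v n)
    (finitaryZ a (vfinP v)).

Definition is_linear (K : nzRingType) (phi : V K -> V K) : Prop :=
  forall (a : K) (v w : V K), phi (vadd (vscale a v) w) = vadd (vscale a (phi v)) (phi w).

Definition pairing (K : nzRingType) (v w : V K) : K :=
  \sum_(i \in [set: nat]) (vdual v i * vfin w i + vdual w i * vfin v i).

(* phi^* sends the functional <w, .> to the functional <w', .> *)
Definition adj_rel (K : nzRingType) (phi : V K -> V K) (w w' : V K) : Prop :=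
  forall v : V K, pairing w (phi v) = pairing w' v.

(* The Mackey group G(U^* (+) U, U^* (+) U): invertible linear phi such that
   phi^* maps U^* (+) U (embedded in (U^* (+) U)^* via the pairing) onto itself *)
Definition in_GU (K : nzRingType) (phi : V K -> V K) : Prop :=
  [/\ is_linear phi, bijective phi,
      (forall w : V K, exists w' : V K, adj_rel phi w w') &
      (forall w' : V K, exists w : V K, adj_rel phi w w')].

Definition idx := (nat + nat)%type.
Definition mat (K : nzRingType) := idx -> idx -> K.

(* the set J: rows of A finitary, columns of D finitary, C finitely many
   nonzero entries. Blocks: A = M (inl _) (inl _), B = M (inl _) (inr _),
   C = M (inr _) (inl _), D = M (inr _) (inr _). *)
Definition in_J (K : nzRingType) (M : mat K) : Prop :=
  [/\ (forall i : nat, finitary (fun j => M (inl i) (inl j))),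
      (forall j : nat, finitary (fun i => M (inr i) (inr j))) &
      (exists N : nat, forall i j : nat, (N <= i)%N \/ (N <= j)%N ->
          M (inr i) (inl j) = 0)].

Definition mat_action (K : nzRingType) (M : mat K) (phi : V K -> V K) : Prop :=
  forall (v : V K) (i : nat),
    vdual (phi v) i =
      \sum_(j \in [set: nat]) (M (inl i) (inl j) * vdual v j)
      + \sum_(j \in [set: nat]) (M (inl i) (inr j) * vfin v j)
    /\ vfin (phi v) i =
      \sum_(j \in [set: nat]) (M (inr i) (inl j) * vdual v j)
      + \sum_(j \in [set: nat]) (M (inr i) (inr j) * vfin v j).

Definition in_GtildeU (K : nzRingType) (phi : V K -> V K) : Prop :=
  exists (psi psi' : mat K) (phi' : V K -> V K),
    [/\ is_linear phi, cancel phi phi', cancel phi' phi,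
        in_J psi /\ mat_action psi phi &
        in_J psi' /\ mat_action psi' phi'].

(* Main.v *)
Require Import Defs.
From HB Require Import structures.
From mathcomp Require Import all_boot all_algebra.
From mathcomp Require Import classical_sets fsbigop reals complex.
From mathcomp Require Import boolp ring.
Import GRing.Theory.
Local Open Scope classical_set_scope.
Local Open Scope ring_scope.

Lemma fsumE (K : nzRingType) (F : nat -> K) (N : nat) :
  (forall n, (N <= n)%N -> F n = 0) ->
  \sum_(i \in [set: nat]) F i = \sum_(i < N) F i.
Proof.
move=> HF; rewrite fsbig_ord; apply/esym/fsbig_widen => // n [_ /=].
by move/negP; rewrite -leqNgt => /HF.
Qed.

Lemma fsum1 (K : nzRingType) (F : nat -> K) (a : nat) :
  (forall n, n != a -> F n = 0) ->
  \sum_(i \in [set: nat]) F i = F a.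
Proof.
move=> HF; rewrite (@fsumE _ _ a.+1) => [|n Hn]; last first.
  by apply: HF; rewrite neq_ltn ltnNge ltnW.
rewrite big_ord_recr /= big1 ?add0r // => i _; apply: HF.
by rewrite neq_ltn ltn_ord.
Qed.

Lemma fsum0 (K : nzRingType) (F : nat -> K) :
  (forall n, F n = 0) -> \sum_(i \in [set: nat]) F i = 0.
Proof. by move=> HF; rewrite (@fsumE _ _ 0) ?big_ord0. Qed.

Section Cfin.
Variable K : nzRingType.
Variables (pk : nat -> nat -> nat * nat) (rb cb : nat -> nat).

Definition stepf (s : nat * nat) : nat * nat :=
  let ij := pk s.1 s.2 in
  (maxn s.1 (maxn ij.1.+1 (cb ij.2)), maxn s.2 (maxn ij.2.+1 (rb ij.1))).
Definition st k := iter k stepf (0%N, 0%N).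
Definition iseq k := (pk (st k).1 (st k).2).1.
Definition jseq k := (pk (st k).1 (st k).2).2.

Lemma st_mono k l : (k <= l)%N -> ((st k).1 <= (st l).1)%N /\ ((st k).2 <= (st l).2)%N.
Proof.
move/subnK <-; elim: (l - k)%N => [|d [IH1 IH2]] //=.
split.
  by apply: leq_trans IH1 _; rewrite leq_maxl.
by apply: leq_trans IH2 _; rewrite leq_maxl.
Qed.

Lemma st_succ k : [/\ (iseq k < (st k.+1).1)%N, (cb (jseq k) <= (st k.+1).1)%N,
   (jseq k < (st k.+1).2)%N & (rb (iseq k) <= (st k.+1).2)%N].
Proof.
rewrite /st /= -/(st _) /stepf /= /iseq /jseq.
set ij := pk _ _.
by rewrite !leq_max !leqnn !orbT.
Qed.

Hypothesis Hpk : forall N M, (N <= (pk N M).1)%N /\ (M <= (pk N M).2)%N.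

Lemma seq_ge k : ((st k).1 <= iseq k)%N /\ ((st k).2 <= jseq k)%N.
Proof. by case: (Hpk (st k).1 (st k).2). Qed.

Lemma st_ge k : (k <= (st k).1)%N /\ (k <= (st k).2)%N.
Proof.
elim: k => [|k [IH1 IH2]] //.
have [h1 _ h3 _] := st_succ k; have [g1 g2] := seq_ge k.
split.
  by apply: leq_trans h1; rewrite ltnS (leq_trans IH1 g1).
by apply: leq_trans h3; rewrite ltnS (leq_trans IH2 g2).
Qed.

End Cfin.

Lemma C_finite (K : nzRingType) (C : nat -> nat -> K) :
  (forall i, finitary (C i)) -> (forall j, finitary (fun i => C i j)) ->
  (forall g : nat -> K, finitary (fun i => \sum_(j \in [set: nat]) C i j * g j)) ->
  exists N, forall i j, (N <= i)%N \/ (N <= j)%N -> C i j = 0.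
Proof.
move=> Hr Hc Hg.
have [rb Hrb] := choice Hr.
have [cb Hcb] := choice Hc.
case: (EM (exists N, forall i j, (N <= i)%N \/ (N <= j)%N -> C i j = 0)) => // HN.
exfalso.
have P2 : forall NM : nat * nat, exists ij : nat * nat,
    [/\ (NM.1 <= ij.1)%N, (NM.2 <= ij.2)%N & C ij.1 ij.2 != 0].
  move=> [N M]; apply: contrapT => Hno; apply: HN.
  exists (maxn (maxn N M) (maxn (\max_(j < M) cb j) (\max_(i < N) rb i))).
  move=> i j Hij; case: (eqVneq (C i j) 0) => // Hnz; exfalso.
  apply: Hno; exists (i, j) => /=; split => //.
  - case: Hij; first by move=> H; apply: leq_trans _ H; rewrite !leq_max leqnn.
    move=> Hj; case: (leqP N i) => // Hi.
    exfalso; move/eqP: Hnz; apply; apply: Hrb.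
    apply: leq_trans _ Hj; rewrite !leq_max; apply/orP; right; apply/orP; right.
    exact: (@leq_bigmax _ (fun i0 : 'I_N => rb i0) (Ordinal Hi)).
  - case: Hij; last by move=> H; apply: leq_trans _ H; rewrite !leq_max leqnn !orbT.
    move=> Hi; case: (leqP M j) => // Hj.
    exfalso; move/eqP: Hnz; apply; apply: Hcb.
    apply: leq_trans _ Hi; rewrite !leq_max; apply/orP; right; apply/orP; left.
    exact: (@leq_bigmax _ (fun i0 : 'I_M => cb i0) (Ordinal Hj)).
have [pk0 Hpk0] := choice P2.
pose pk N M := pk0 (N, M).
have Hpk : forall N M, (N <= (pk N M).1)%N /\ (M <= (pk N M).2)%N.
  by move=> N M; case: (Hpk0 (N, M)).
have Hnz : forall k, C (iseq pk rb cb k) (jseq pk rb cb k) != 0.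
  by move=> k; case: (Hpk0 ((st pk rb cb k).1, (st pk rb cb k).2)).
set I := iseq pk rb cb; set J := jseq pk rb cb.
have Hlt : forall l k, (l < k)%N -> C (I k) (J l) = 0.
  move=> l k Hlk; apply: (Hcb).
  have [_ h2 _ _] := st_succ pk rb cb l.
  have [m1 _] := st_mono pk rb cb l.+1 k Hlk.
  have [g1 _] := seq_ge pk rb cb Hpk k.
  exact: leq_trans h2 (leq_trans m1 g1).
have Hgt : forall l k, (k < l)%N -> C (I k) (J l) = 0.
  move=> l k Hlk; apply: (Hrb).
  have [_ _ _ h4] := st_succ pk rb cb k.
  have [_ m2] := st_mono pk rb cb k.+1 l Hlk.
  have [_ g2] := seq_ge pk rb cb Hpk l.
  exact: leq_trans h4 (leq_trans m2 g2).
pose g := fun j => (has (fun k => J k == j) (iota 0 j.+1))%:R : K.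
have Hsum : forall k, \sum_(j \in [set: nat]) C (I k) j * g j = C (I k) (J k).
  move=> k; rewrite (@fsum1 _ _ (J k)).
    rewrite /g; have -> : has (fun k0 => J k0 == J k) (iota 0 (J k).+1).
      apply/hasP; exists k => //; rewrite mem_iota add0n /= ltnS.
      have [_ a2] := st_ge pk rb cb Hpk k; have [_ b2] := seq_ge pk rb cb Hpk k.
      exact: leq_trans a2 b2.
    by rewrite mulr1.
  move=> j Hj; rewrite /g; case: hasP => [[l _ /eqP Hl]|]; last by rewrite mulr0.
  subst j; case: (ltngtP l k) => Hlk.
  - by rewrite Hlt ?mul0r.
  - by rewrite Hgt ?mul0r.
  - by subst l; rewrite eqxx in Hj.
have [B HB] := Hg g.
move: (Hnz B); rewrite -/I -/J -Hsum HB ?eqxx //.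
have [a1 _] := st_ge pk rb cb Hpk B; have [b1 _] := seq_ge pk rb cb Hpk B.
exact: leq_trans a1 b1.
Qed.

Lemma fin_ident (K : comNzRingType) (L : nat) (wd wf g y : nat -> K)
  (A B C D : nat -> nat -> K) :
 \sum_(i < L) (wd i * (\sum_(j < L) C i j * g j + \sum_(j < L) D i j * y j)
     + (\sum_(j < L) A i j * g j + \sum_(j < L) B i j * y j) * wf i)
 = \sum_(j < L) ((\sum_(i < L) wd i * D i j + \sum_(i < L) wf i * B i j) * y j
     + g j * (\sum_(i < L) wd i * C i j + \sum_(i < L) wf i * A i j)).
Proof.
have E1 : forall i : 'I_L, wd i * (\sum_(j < L) C i j * g j + \sum_(j < L) D i j * y j)
     + (\sum_(j < L) A i j * g j + \sum_(j < L) B i j * y j) * wf i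
   = \sum_(j < L) (wd i * (C i j * g j) + wd i * (D i j * y j)
        + (A i j * g j) * wf i + (B i j * y j) * wf i).
  move=> i; rewrite !big_split /= mulrDr mulrDl !big_distrr !big_distrl /=.
  by rewrite !addrA.
have E2 : forall j : 'I_L, (\sum_(i < L) wd i * D i j + \sum_(i < L) wf i * B i j) * y j
     + g j * (\sum_(i < L) wd i * C i j + \sum_(i < L) wf i * A i j)
   = \sum_(i < L) ((wd i * D i j) * y j + (wf i * B i j) * y j
        + g j * (wd i * C i j) + g j * (wf i * A i j)).
  move=> j; rewrite !big_split /= mulrDr mulrDl !big_distrr !big_distrl /=.
  by rewrite !addrA.
rewrite (eq_bigr _ (fun i _ => E1 i)) (eq_bigr _ (fun j _ => E2 j)).
rewrite exchange_big; apply: eq_bigr => j _; apply: eq_bigr => i _; ring.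
Qed.

Definition delta (K : nzRingType) (i : nat) : nat -> K := fun k => (k == i)%:R.
Lemma fin0 (K : nzRingType) : finitary (fun _ : nat => (0 : K)).
Proof. by exists 0%N. Qed.
Lemma fin_delta (K : nzRingType) i : finitary (@delta K i).
Proof. by exists i.+1 => n Hn; rewrite /delta; case: eqP => // E; rewrite E ltnn in Hn. Qed.
Definition eU (K : nzRingType) i := @mkV K (fun _ => 0) (delta K i) (fin_delta K i).
Definition eD (K : nzRingType) i := @mkV K (delta K i) (fun _ => 0) (fin0 K).
Definition vD (K : nzRingType) g := @mkV K g (fun _ => 0) (fin0 K).

Lemma pairing_eU (K : nzRingType) (u : V K) i : pairing (eU K i) u = vdual u i.
Proof.
rewrite /pairing (@fsum1 _ _ i) /= /delta ?eqxx ?mul0r ?add0r ?mulr1 //.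
by move=> n /negbTE Hn; rewrite Hn mul0r mulr0 addr0.
Qed.

Lemma pairing_eD (K : nzRingType) (u : V K) i : pairing (eD K i) u = vfin u i.
Proof.
rewrite /pairing (@fsum1 _ _ i) /= /delta ?eqxx ?mul1r ?mulr0 ?addr0 //.
by move=> n /negbTE Hn; rewrite Hn mul0r mulr0 addr0.
Qed.

Lemma pairing_split (K : comNzRingType) (w v : V K) :
  pairing w v = \sum_(j \in [set: nat]) (vfin w j * vdual v j)
              + \sum_(j \in [set: nat]) (vdual w j * vfin v j).
Proof.
have [Nw Hw] := vfinP w; have [Nv Hv] := vfinP v.
have l1 : forall n, (maxn Nw Nv <= n)%N -> (Nw <= n)%N.
  by move=> n; apply: leq_trans; rewrite leq_maxl.
have l2 : forall n, (maxn Nw Nv <= n)%N -> (Nv <= n)%N.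
  by move=> n; apply: leq_trans; rewrite leq_maxr.
rewrite /pairing !(@fsumE _ _ (maxn Nw Nv)).
- rewrite big_split /= addrC; congr (_ + _); apply: eq_bigr => j _; exact: mulrC.
- by move=> n /l2 /Hv ->; rewrite mulr0.
- by move=> n /l1 /Hw ->; rewrite mul0r.
- by move=> n Hn; rewrite Hv ?Hw ?mulr0 ?addr0 ?l1 ?l2.
Qed.

Lemma mat_colD (K : nzRingType) (psi : mat K) phi i j :
  mat_action psi phi -> psi (inr i) (inr j) = vfin (phi (eU K j)) i.
Proof.
move=> Hact; have [_ ->] := Hact (eU K j) i.
rewrite fsum0 /= ?add0r => [|n]; last by rewrite mulr0.
rewrite (@fsum1 _ _ j) /= /delta ?eqxx ?mulr1 //.
by move=> n /negbTE ->; rewrite mulr0.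
Qed.

Lemma mat_colC (K : nzRingType) (psi : mat K) phi i j :
  mat_action psi phi -> psi (inr i) (inl j) = vfin (phi (eD K j)) i.
Proof.
move=> Hact; have [_ ->] := Hact (eD K j) i.
rewrite [X in _ + X]fsum0 /= ?addr0 => [|n]; last by rewrite mulr0.
rewrite (@fsum1 _ _ j) /= /delta ?eqxx ?mulr1 //.
by move=> n /negbTE ->; rewrite mulr0.
Qed.

Lemma GU_mat (K : comNzRingType) (phi : V K -> V K) :
  (forall w, exists w', adj_rel phi w w') ->
  exists psi, in_J psi /\ mat_action psi phi.
Proof.
move=> H; have [f Hf] := choice H.
pose psi : mat K := fun a b => match a, b with
  | inl i, inl j => vfin (f (eU K i)) j
  | inl i, inr j => vdual (f (eU K i)) j
  | inr i, inl j => vfin (f (eD K i)) j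
  | inr i, inr j => vdual (f (eD K i)) j end.
have Hact : mat_action psi phi.
  move=> v i; split.
  - by rewrite -pairing_eU Hf pairing_split.
  - by rewrite -pairing_eD Hf pairing_split.
exists psi; split => //; split.
- move=> i; exact: (vfinP (f (eU K i))).
- move=> j; have [N HN] := vfinP (phi (eU K j)).
  by exists N => n Hn; rewrite (@mat_colD _ psi phi n j Hact) HN.
- apply: (@C_finite K (fun i j => psi (inr i) (inl j))).
  + move=> i; exact: (vfinP (f (eD K i))).
  + move=> j; have [N HN] := vfinP (phi (eD K j)).
    by exists N => n Hn; rewrite (@mat_colC _ psi phi n j Hact) HN.
  + move=> g; have [N HN] := vfinP (phi (vD K g)).
    exists N => n Hn; have [_ E] := Hact (vD K g) n.
    transitivity (vfin (phi (vD K g)) n); last exact: HN.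
    rewrite E [X in _ + X]fsum0 ?addr0 // => k; by rewrite mulr0.
Qed.

Lemma adj_exists (K : comNzRingType) (psi : mat K) phi :
  in_J psi -> mat_action psi phi -> forall w, exists w', adj_rel phi w w'.
Proof.
move=> [HA HD [Nc HC]] Hact w.
have [ab Hab] := choice HA.
have [db Hdb] := choice HD.
have [Nw Hw] := vfinP w.
pose Na := (\max_(i < Nw) ab i)%N.
have HAw : forall i j, (Na <= j)%N -> vfin w i * psi (inl i) (inl j) = 0.
  move=> i j Hj; case: (ltnP i Nw) => Hi; last by rewrite Hw ?mul0r.
  rewrite Hab ?mulr0 //; apply: leq_trans _ Hj.
  exact: (@leq_bigmax _ (fun i0 : 'I_Nw => ab i0) (Ordinal Hi)).
pose wd j := \sum_(i \in [set: nat]) (vdual w i * psi (inr i) (inr j))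
           + \sum_(i \in [set: nat]) (vfin w i * psi (inl i) (inr j)).
pose wf j := \sum_(i \in [set: nat]) (vdual w i * psi (inr i) (inl j))
           + \sum_(i \in [set: nat]) (vfin w i * psi (inl i) (inl j)).
have wf0 : forall j, (maxn Nc Na <= j)%N -> wf j = 0.
  move=> j Hj; rewrite /wf [X in X + _]fsum0 ?add0r; last first.
    by move=> i; rewrite HC ?mulr0 //; right; exact: leq_trans (leq_maxl _ _) Hj.
  by rewrite fsum0 // => i; rewrite HAw // (leq_trans (leq_maxr _ _) Hj).
have fin_wf : finitary wf by exists (maxn Nc Na).
exists (mkV wd fin_wf) => v.
have [Ny Hy] := vfinP v; have [Np Hp] := vfinP (phi v).
pose Nd := (\max_(j < Ny) db j)%N.
pose L := maxn (maxn (maxn Nw Ny) (maxn Np Nc)) (maxn Na Nd).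
have lw : forall n, (L <= n)%N -> (Nw <= n)%N.
  by move=> n; apply: leq_trans; rewrite !leq_max leqnn ?orbT.
have ly : forall n, (L <= n)%N -> (Ny <= n)%N.
  by move=> n; apply: leq_trans; rewrite !leq_max leqnn ?orbT.
have lp : forall n, (L <= n)%N -> (Np <= n)%N.
  by move=> n; apply: leq_trans; rewrite !leq_max leqnn ?orbT.
have lc : forall n, (L <= n)%N -> (Nc <= n)%N.
  by move=> n; apply: leq_trans; rewrite !leq_max leqnn ?orbT.
have la : forall n, (L <= n)%N -> (Na <= n)%N.
  by move=> n; apply: leq_trans; rewrite !leq_max leqnn ?orbT.
have ld : forall n, (L <= n)%N -> (Nd <= n)%N.
  by move=> n; apply: leq_trans; rewrite !leq_max leqnn ?orbT.
rewrite /pairing [LHS](@fsumE _ _ L); last first.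
  by move=> n Hn; rewrite Hp ?lp // Hw ?lw // mulr0 mulr0 addr0.
rewrite [RHS](@fsumE _ _ L); last first.
  move=> n Hn /=; rewrite Hy ?ly // wf0 ?mulr0 ?addr0 //.
  by rewrite geq_max lc ?la.
rewrite [LHS](eq_bigr (fun i : 'I_L => vdual w i *
   (\sum_(j < L) psi (inr (i : nat)) (inl (j : nat)) * vdual v j + \sum_(j < L) psi (inr (i : nat)) (inr (j : nat)) * vfin v j)
   + (\sum_(j < L) psi (inl (i : nat)) (inl (j : nat)) * vdual v j + \sum_(j < L) psi (inl (i : nat)) (inr (j : nat)) * vfin v j)
     * vfin w i)); last first.
  move=> i _; have [E1 E2] := Hact v i; congr (_ * _ + _).
    rewrite E2 !(@fsumE _ _ L) // => n Hn; first by rewrite Hy ?ly // mulr0.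
    by rewrite HC ?mul0r //; right; exact: lc.
  case: (ltnP i Nw) => Hi; last by rewrite Hw // !mulr0.
  rewrite E1 !(@fsumE _ _ L) // => n Hn; first by rewrite Hy ?ly // mulr0.
  rewrite Hab ?mul0r //; apply: leq_trans (la _ Hn).
  exact: (@leq_bigmax _ (fun i0 : 'I_Nw => ab i0) (Ordinal Hi)).
rewrite [RHS](eq_bigr (fun j : 'I_L =>
   (\sum_(i < L) vdual w i * psi (inr (i : nat)) (inr (j : nat)) + \sum_(i < L) vfin w i * psi (inl (i : nat)) (inr (j : nat)))
     * vfin v j
   + vdual v j * (\sum_(i < L) vdual w i * psi (inr (i : nat)) (inl (j : nat))
                  + \sum_(i < L) vfin w i * psi (inl (i : nat)) (inl (j : nat))))); last first.
  move=> j _ /=; congr (_ + _ * _).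
    case: (ltnP j Ny) => Hj; last by rewrite Hy // !mulr0.
    rewrite /wd !(@fsumE _ _ L) // => n Hn; first by rewrite Hw ?lw // mul0r.
    rewrite Hdb ?mulr0 //; apply: leq_trans (ld _ Hn).
    exact: (@leq_bigmax _ (fun i0 : 'I_Ny => db i0) (Ordinal Hj)).
  rewrite /wf !(@fsumE _ _ L) // => n Hn; first by rewrite Hw ?lw // mul0r.
  by rewrite HC ?mulr0 //; left; exact: lc.
have := @fin_ident K L (vdual w) (vfin w) (vdual v) (vfin v)
  (fun i j => psi (inl i) (inl j)) (fun i j => psi (inl i) (inr j))
  (fun i j => psi (inr i) (inl j)) (fun i j => psi (inr i) (inr j)).
move=> /= E. exact: E.
Qed.

Theorem theoremA8 (R : realType) (phi : V R[i] -> V R[i]) :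
  in_GU phi <-> in_GtildeU phi.
Proof.
split.
- move=> [Hlin [phi' c1 c2] Hadj Hsurj].
  have [psi [HJ Hact]] := @GU_mat _ phi Hadj.
  have Hadj' : forall w, exists w', adj_rel phi' w w'.
    move=> w; have [u Hu] := Hsurj w; exists u => v.
    by rewrite -[X in _ = pairing u X](c2 v) Hu.
  have [psi' [HJ' Hact']] := @GU_mat _ phi' Hadj'.
  by exists psi, psi', phi'; split.
- move=> [psi [psi' [phi' [Hlin c1 c2 [HJ Hact] [HJ' Hact']]]]]; split => //.
  + by exists phi'.
  + exact: (@adj_exists _ psi phi HJ Hact).
  + move=> w'; have [w Hw] := @adj_exists _ psi' phi' HJ' Hact' w'.
    by exists w => v; rewrite -Hw c1.
Qed.
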